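(* Let $\Omega$ be a countable set, $G$ a closed subgroup of $S=\mathrm{Sym}(\Omega)$, and $\Sigma$ a subset of $\Omega$. Then either (i) there exists a finite set $\Gamma\subseteq\Omega$ such that $G_{(\Gamma)}\le S_{(\Sigma)}$, or (ii) there exists an element $g\in G$ which moves infinitely many members of $\Sigma$.
   Context: $\mathrm{Sym}(\Omega)$ is the group of all permutations of $\Omega$, with the function topology (pointwise convergence, $\Omega$ discrete); ''closed'' means closed in $S$. For $H\le S$ and $\Gamma\subseteq\Omega$, $H_{(\Gamma)}$ is the pointwise stabilizer of $\Gamma$ in $H$. *)

(* Defs.v *)
From mathcomp Require Import all_boot.
From mathcomp Require Export classical_sets cardinality.
Set Implicit Arguments. Unset Strict Implicit. Unset Printing Implicit Defensive.
Local Open Scope classical_set_scope.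

Definition Sym (T : Type) : set (T -> T) := [set g | bijective g].

Definition subgroup_Sym (T : Type) (G : set (T -> T)) : Prop :=
  [/\ G `<=` @Sym T, G id,
      (forall g h, G g -> G h -> G (g \o h))
    & (forall g h, G g -> cancel g h -> cancel h g -> G h)].

(* G is closed in Sym(T) for the function topology (pointwise convergence,
   T discrete): every permutation g lying in the closure of G belongs to G,
   where g is in the closure iff every basic neighbourhood
   {h | h agrees with g on A}, A finite, meets G. *)
Definition closed_in_Sym (T : Type) (G : set (T -> T)) : Prop :=
  forall g, @Sym T g ->
    (forall A : set T, finite_set A -> exists2 h, G h & forall x, A x -> h x = g x) ->
    G g.

Definition pstab (T : Type) (H : set (T -> T)) (Gamma : set T) : set (T -> T) :=
  [set g | H g /\ forall x, Gamma x -> g x = x].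

(* Main.v *)
Require Import Defs.
From mathcomp Require Import all_boot classical_sets cardinality boolp.
Set Implicit Arguments. Unset Strict Implicit.
Local Open Scope classical_set_scope.

Definition Gam (Omega : countType) (n : nat) (hinv : Omega -> Omega) (xs : seq Omega) : set Omega :=
  [set y | (pickle y < n)%N] `|` (hinv @` [set y | (pickle y < n)%N]) `|` [set` xs].

Definition stT (Omega : countType) := ((Omega -> Omega) * (Omega -> Omega) * seq Omega)%type.

Definition step (Omega : countType)
  (pick : set Omega -> (Omega -> Omega) * (Omega -> Omega) * Omega) (n : nat) (s : stT Omega) : stT Omega :=
  let: (h, hinv, xs) := s in
  let: (k, kinv, x) := pick (Gam n hinv xs) in
  if h x != x then (h, hinv, x :: xs) else (h \o k, kinv \o hinv, x :: xs).

Fixpoint st (Omega : countType) (pick : set Omega -> (Omega -> Omega) * (Omega -> Omega) * Omega) (n : nat) : stT Omega :=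
  match n with 0 => (id, id, [::]) | n'.+1 => step pick n' (st pick n') end.

Lemma finite_Gam (Omega : countType) (n : nat) (hinv : Omega -> Omega) xs : finite_set (Gam n hinv xs).
Proof.
have F : finite_set [set y : Omega | (pickle y < n)%N].
  have -> : [set y : Omega | (pickle y < n)%N] = pickle @^-1` `I_n by [].
  apply: finite_preimage => //. by move=> x y _ _; apply: (pcan_inj (@pickleK _)).
rewrite /Gam !finite_setU; split; [split|] => //; exact: finite_image.
Qed.

Lemma Gam_xs (Omega : countType) (n : nat) (hinv : Omega -> Omega) xs x :
  x \in xs -> Gam n hinv xs x.
Proof. by move=> h; right. Qed.
Lemma Gam_pk (Omega : countType) (n : nat) (hinv : Omega -> Omega) xs x :
  (pickle x < n)%N -> Gam n hinv xs x.
Proof. by move=> h; left; left. Qed.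
Lemma Gam_hi (Omega : countType) (n : nat) (hinv : Omega -> Omega) xs x :
  (pickle x < n)%N -> Gam n hinv xs (hinv x).
Proof. by move=> h; left; right; exists x. Qed.

Definition pick_spec (Omega : countType) (G : set (Omega -> Omega)) (Sigma : set Omega)
  (pick : set Omega -> (Omega -> Omega) * (Omega -> Omega) * Omega) :=
  forall Gamma, finite_set Gamma ->
   [/\ G (pick Gamma).1.1, cancel (pick Gamma).1.1 (pick Gamma).1.2,
       cancel (pick Gamma).1.2 (pick Gamma).1.1,
       (forall y, Gamma y -> (pick Gamma).1.1 y = y) &
       Sigma (pick Gamma).2 /\ (pick Gamma).1.1 (pick Gamma).2 <> (pick Gamma).2].

Lemma step_spec (Omega : countType) (G : set (Omega -> Omega)) (Sigma : set Omega) pick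
  (HG : subgroup_Sym G) (Hp : pick_spec G Sigma pick) (n : nat) :
  let s := st pick n in let s' := st pick n.+1 in
  let Gm := Gam n s.1.2 s.2 in let x := (pick Gm).2 in
  [/\ s'.2 = x :: s.2,
      (forall y, Gm y -> s'.1.1 y = s.1.1 y),
      (forall y, Gm (s.1.2 y) -> s'.1.2 y = s.1.2 y),
      (injective s.1.1 -> s'.1.1 x <> x) &
      [/\ Sigma x, ~ Gm x &
      (G s.1.1 /\ cancel s.1.1 s.1.2 /\ cancel s.1.2 s.1.1 ->
       G s'.1.1 /\ cancel s'.1.1 s'.1.2 /\ cancel s'.1.2 s'.1.1)]].
Proof.
rewrite /=; case: (st pick n) => [[h hi] xs] /=.
have := Hp _ (finite_Gam n hi xs).
case: (pick _) => [[k ki] x] /= [Gk kK Kk kfix [Sx kx]].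
have nG : ~ Gam n hi xs x by move=> /kfix.
case: HG => _ _ Gc _.
case: ifP => /= hx.
  split => //; first by move/eqP: hx.
split => //.
- by move=> y /kfix ->.
- by move=> y /kfix e; rewrite -{1}e kK.
- by move=> hinj e; apply: kx; apply: hinj; rewrite e; move/negbFE/eqP: hx.
- split => // -[Gh [hK Kh]]; split; first exact: Gc.
  by split => y /=; rewrite ?hK ?kK ?Kk ?Kh.
Qed.


Local Notation hh pick n := (st pick n).1.1.
Local Notation hi pick n := (st pick n).1.2.
Local Notation xs pick n := (st pick n).2.
Local Notation xq pick n := (pick (Gam n (hi pick n) (xs pick n))).2.

Lemma st_inv (Omega : countType) (G : set (Omega -> Omega)) (Sigma : set Omega) pick
  (HG : subgroup_Sym G) (Hp : pick_spec G Sigma pick) (n : nat) :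
  G (hh pick n) /\ cancel (hh pick n) (hi pick n) /\ cancel (hi pick n) (hh pick n).
Proof.
elim: n => [|n IH]; first by case: HG.
by have [_ _ _ _ [_ _]] := step_spec HG Hp n; apply.
Qed.

Lemma st_stab (Omega : countType) (G : set (Omega -> Omega)) (Sigma : set Omega) pick
  (HG : subgroup_Sym G) (Hp : pick_spec G Sigma pick) (n m : nat) y :
  (pickle y < n)%N -> (n <= m)%N -> hh pick m y = hh pick n y /\ hi pick m y = hi pick n y.
Proof.
move=> yn /subnK <-; elim: (m - n)%N => [|d [IH1 IH2]] //=.
have [_ E1 E2 _ _] := step_spec HG Hp (d + n).
rewrite -IH1 -IH2; split.
  by apply: E1; apply: Gam_pk; apply: leq_trans yn (leq_addl _ _).
apply: E2; apply: Gam_hi; apply: leq_trans yn (leq_addl _ _).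
Qed.

Lemma xs_grow (Omega : countType) (G : set (Omega -> Omega)) (Sigma : set Omega) pick
  (HG : subgroup_Sym G) (Hp : pick_spec G Sigma pick) (n m : nat) x :
  x \in xs pick n -> (n <= m)%N -> x \in xs pick m.
Proof.
move=> xn /subnK <-; elim: (m - n)%N => [|d IH] //=.
have [E _ _ _ _] := step_spec HG Hp (d + n).
by rewrite [X in _ \in X]E inE IH orbT.
Qed.

Lemma xq_in (Omega : countType) (G : set (Omega -> Omega)) (Sigma : set Omega) pick
  (HG : subgroup_Sym G) (Hp : pick_spec G Sigma pick) (n m : nat) :
  (n < m)%N -> xq pick n \in xs pick m.
Proof.
move=> nm; apply: (xs_grow HG Hp _ nm).
have [E _ _ _ _] := step_spec HG Hp n.
by rewrite [X in _ \in X]E inE eqxx.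
Qed.

Lemma xq_moved (Omega : countType) (G : set (Omega -> Omega)) (Sigma : set Omega) pick
  (HG : subgroup_Sym G) (Hp : pick_spec G Sigma pick) (n m : nat) :
  (n < m)%N -> hh pick m (xq pick n) <> xq pick n.
Proof.
move=> /subnK <-; elim: (m - n.+1)%N => [|d IH] /=.
  have [_ _ _ H _] := step_spec HG Hp n.
  apply: H; have [_ [K _]] := st_inv HG Hp n; exact: can_inj K.
have [_ E1 _ _ _] := step_spec HG Hp (d + n.+1).
rewrite E1 //; apply: Gam_xs; apply: (xq_in HG Hp); by rewrite addnS ltnS leq_addl.
Qed.

Lemma xq_inj (Omega : countType) (G : set (Omega -> Omega)) (Sigma : set Omega) pick
  (HG : subgroup_Sym G) (Hp : pick_spec G Sigma pick) : injective (fun n => xq pick n).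
Proof.
suff H : forall m n, (m < n)%N -> xq pick m <> xq pick n.
  move=> m n e; case: (ltngtP m n) => // mn; [case: (H _ _ mn e)|case: (H _ _ mn (esym e))].
move=> m n mn e; have [_ _ _ _ [_ nG _]] := step_spec HG Hp n.
by apply: nG; apply: Gam_xs; rewrite -e; exact: (xq_in HG Hp mn).
Qed.

Lemma seq_bound (T : countType) (s : seq T) : exists N, forall y, y \in s -> (pickle y < N)%N.
Proof.
elim: s => [|a s [N HN]]; first by exists 0%N.
exists (maxn (pickle a).+1 N) => y; rewrite inE => /orP[/eqP ->|/HN yN].
  by rewrite leq_max leqnn.
by rewrite leq_max yN orbT.
Qed.

Theorem corollary11p3 (Omega : countType) (G : set (Omega -> Omega))
  (Sigma : set Omega) :
  subgroup_Sym G -> closed_in_Sym G ->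
  (exists Gamma : set Omega, finite_set Gamma /\ pstab G Gamma `<=` pstab (@Sym Omega) Sigma)
  \/ (exists2 g, G g & infinite_set [set x | Sigma x /\ g x <> x]).
Proof.
move=> HG Hcl.
case: (EM (exists Gamma : set Omega, finite_set Gamma /\ pstab G Gamma `<=` pstab (@Sym Omega) Sigma)) => [h|nh]; [by left|right].
have Hex : forall Gamma : set Omega, exists p : (Omega -> Omega) * (Omega -> Omega) * Omega,
  finite_set Gamma ->
   [/\ G p.1.1, cancel p.1.1 p.1.2, cancel p.1.2 p.1.1,
       (forall y, Gamma y -> p.1.1 y = y) & Sigma p.2 /\ p.1.1 p.2 <> p.2].
  move=> Gamma; case: (EM (finite_set Gamma)) => [fG|nfG]; last first.
    have [x _] := infinite_setN0 nfG; by exists (id, id, x).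
  have : ~ (pstab G Gamma `<=` pstab (@Sym Omega) Sigma) by move=> H; apply: nh; exists Gamma.
  move=> /existsNP[k /not_implyP[[Gk kfix] nk]].
  have [sub _ _ _] := HG; have [ki kK Kk] := sub _ Gk.
  have : ~ (forall x, Sigma x -> k x = x) by move=> H; apply: nk; split => //; exists ki.
  move=> /existsNP[x /not_implyP[Sx kx]].
  by exists (k, ki, x).
have [pick Hpick] := choice Hex.
have Hp : pick_spec G Sigma pick by move=> Gamma fG; exact: Hpick.
pose g y := hh pick (pickle y).+1 y.
pose gi y := hi pick (pickle y).+1 y.
have gN : forall y N, ((pickle y).+1 <= N)%N -> hh pick N y = g y /\ hi pick N y = gi y.
  by move=> y N yN; apply: (st_stab HG Hp).
have gK : cancel g gi.
  move=> y; set N := maxn (pickle y).+1 (pickle (g y)).+1.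
  have [E1 _] := gN y N (leq_maxl _ _).
  have [_ E2] := gN (g y) N (leq_maxr _ _).
  have [_ [K _]] := st_inv HG Hp N.
  by rewrite -E2 -E1 K.
have Kg : cancel gi g.
  move=> y; set N := maxn (pickle y).+1 (pickle (gi y)).+1.
  have [_ E1] := gN y N (leq_maxl _ _).
  have [E2 _] := gN (gi y) N (leq_maxr _ _).
  have [_ [_ K]] := st_inv HG Hp N.
  by rewrite -E2 -E1 K.
have Gg : G g.
  apply: Hcl; first by exists gi.
  move=> A /finite_seqP[s ->]; have [N HN] := seq_bound s.
  exists (hh pick N); first by have [] := st_inv HG Hp N.
  by move=> y /= ys; have [] := gN y N (HN y ys).
exists g => // fin.
apply: infinite_nat.
have -> : [set: nat] = (fun n => xq pick n) @^-1` [set x | Sigma x /\ g x <> x].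
  apply/seteqP; split => // n _ /=.
  have [_ _ _ _ [Sx _ _]] := step_spec HG Hp n.
  split => //.
  set N := maxn (pickle (xq pick n)).+1 n.+1.
  have [<- _] := gN (xq pick n) N (leq_maxl _ _).
  by apply: (xq_moved HG Hp); rewrite /N leq_max leqnn orbT.
apply: finite_preimage fin => x y _ _; exact: (xq_inj HG Hp).
Qed.
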